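(* Let $\varepsilon>1$ and $\lambda\ge0$ with $\lambda\neq\lambda_c(\varepsilon)$. (a) If $0\le\lambda<\lambda_c(\varepsilon)$, the function $\xi\mapsto G_{\varepsilon,\lambda}(\xi,\pi_{\xi-}(\xi))$, defined on the incoming branch $\{(\xi,\pi_{\xi-}(\xi)):\xi\ge2\}$, is smooth and increases monotonically from $-\infty$ to $0$ as one moves along this branch from $\xi=\infty$ to $\xi=2$. (b) If $\lambda>\lambda_c(\varepsilon)$, the function $G_{\varepsilon,\lambda}$ on the scattering curve $\mathcal C=\{(\xi,\pi_{\xi\pm}(\xi)):\xi\ge\xi_0\}$ is smooth (including at the turning point) and increases monotonically from $-\infty$ to $+\infty$ as one moves along $\mathcal C$ clockwise, i.e. from $\xi=\infty$ along the incoming branch $\pi_{\xi-}$ through the turning point $\xi_0$ to $\xi=\infty$ along the outgoing branch $\pi_{\xi+}$.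
   Context: Dimensionless potential: $U_\lambda(\xi)=(1-\tfrac2\xi)(1+\tfrac{\lambda^2}{\xi^2})$. For $\varepsilon>1$, $\lambda_c(\varepsilon)$ is the value of $\lambda$ for which the local maximum of $U_\lambda$ equals $\varepsilon^2$; explicitly $\lambda_c(\varepsilon)^2=12/(1-4\alpha-8\alpha^2+8\alpha\sqrt{\alpha^2+\alpha})$, $\alpha=\tfrac98\varepsilon^2-1$. Let $s(\xi)=\sqrt{\varepsilon^2-U_\lambda(\xi)}$ and $\pi_{\xi\pm}(\xi)=(\tfrac2\xi\varepsilon\pm s(\xi))/(1-\tfrac2\xi)$ (for the minus sign, equivalently $\pi_{\xi-}=(1+\lambda^2/\xi^2-(1+\tfrac2\xi)\varepsilon^2)/(\tfrac2\xi\varepsilon+s)$, regular at $\xi=2$); these are the solutions of $(1-\tfrac2\xi)\pi_\xi^2-\tfrac4\xi\varepsilon\pi_\xi-(1+\tfrac2\xi)\varepsilon^2+1+\tfrac{\lambda^2}{\xi^2}=0$. The function $G_{\varepsilon,\lambda}$ is the line integral along this curve $G_{\varepsilon,\lambda}(\xi,\pi_\xi)=\int_{\gamma_{(\xi,\pi_\xi)}}\frac{\frac2\xi\pi_\xi+(1+\frac2\xi)\varepsilon}{(1-\frac2\xi)\pi_\xi-\frac2\xi\varepsilon}d\xi$ from a reference point to $(\xi,\pi_\xi)$: in case $\lambda<\lambda_c(\varepsilon)$ the reference point is $(2,\pi_{\xi-}(2))$ on the incoming branch; in case $\lambda>\lambda_c(\varepsilon)$ it is the turning point $(\xi_0,\pi_{\xi\pm}(\xi_0))$,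 where $\xi_0$ is the unique root of $U_\lambda(\xi_0)=\varepsilon^2$ larger than the location of the maximum of $U_\lambda$. *)

(* Defs.v *)
From Stdlib Require Import Reals Lra.
From Coquelicot Require Import Coquelicot.
Open Scope R_scope.

Definition U (lam x : R) : R := (1 - 2 / x) * (1 + lam ^ 2 / x ^ 2).

Definition alpha (eps : R) : R := 9 / 8 * eps ^ 2 - 1.
Definition lambda_c (eps : R) : R :=
  let a := alpha eps in
  sqrt (12 / (1 - 4 * a - 8 * a ^ 2 + 8 * a * sqrt (a ^ 2 + a))).

Definition s_fun (eps lam x : R) : R := sqrt (eps ^ 2 - U lam x).

Definition pi_plus (eps lam x : R) : R :=
  (2 / x * eps + s_fun eps lam x) / (1 - 2 / x).

(* incoming branch pi_{xi-}, in the form regular at xi = 2 *)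
Definition pi_minus (eps lam x : R) : R :=
  (1 + lam ^ 2 / x ^ 2 - (1 + 2 / x) * eps ^ 2) / (2 / x * eps + s_fun eps lam x).

(* the integrand of the 1-form defining G: integrand(xi, pi) dxi *)
Definition integrand (eps x p : R) : R :=
  (2 / x * p + (1 + 2 / x) * eps) / ((1 - 2 / x) * p - 2 / x * eps).

Definition G_in (eps lam x : R) : R :=
  RInt (fun t => integrand eps t (pi_minus eps lam t)) 2 x.

(* location of the local maximum of U_lambda (root of U' = 0, smaller one) *)
Definition xi_max (lam : R) : R := (lam ^ 2 - sqrt (lam ^ 4 - 12 * lam ^ 2)) / 2.

(* Case lambda > lambda_c: regular parametrization of the scattering curve C,
   tau in R |-> (xi0 + tau^2, pi(tau)), tau < 0 on the incoming branch,
   tau > 0 on the outgoing branch, tau = 0 the turning point; increasing tau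
   is the clockwise orientation (xi = oo incoming -> xi0 -> xi = oo outgoing). *)
Definition curve_xi (xi0 t : R) : R := xi0 + t ^ 2.
Definition curve_pi (eps lam xi0 t : R) : R :=
  if Rlt_dec t 0 then pi_minus eps lam (curve_xi xi0 t)
  else pi_plus eps lam (curve_xi xi0 t).

Definition G_scat (eps lam xi0 tau : R) : R :=
  RInt (fun t => integrand eps (curve_xi xi0 t) (curve_pi eps lam xi0 t) * (2 * t))
       0 tau.

(* Main.v *)
Require Import Defs.
From Stdlib Require Import Reals Lra Psatz.
From Coquelicot Require Import Coquelicot.
Open Scope R_scope.


Fixpoint Sm (D : R -> Prop) (n : nat) (f : R -> R) : Prop :=
  match n with
  | O => True
  | S n => exists f', (forall x, D x -> is_derive f x (f' x)) /\ Sm D n f'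
  end.

Lemma Sm_down D : forall n f, Sm D (S n) f -> Sm D n f.
Proof.
  induction n as [|n IH]; intros f H; simpl in *; auto.
  destruct H as [f' [H1 H2]]. exists f'. split; auto.
Qed.

Lemma Sm_const D : forall n c, Sm D n (fun _ => c).
Proof.
  induction n as [|n IH]; intros c; simpl; auto.
  exists (fun _ => 0). split; auto. intros x _. apply (is_derive_const c x).
Qed.

Lemma Sm_id D : forall n, Sm D n (fun x => x).
Proof.
  destruct n; simpl; auto. exists (fun _ => 1). split.
  intros x _. apply (is_derive_id x). apply Sm_const.
Qed.

Lemma Sm_plus D : forall n f g, Sm D n f -> Sm D n g -> Sm D n (fun x => f x + g x).
Proof.
  induction n as [|n IH]; intros f g Hf Hg; simpl in *; auto.
  destruct Hf as [f' [Hf1 Hf2]]; destruct Hg as [g' [Hg1 Hg2]].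
  exists (fun x => f' x + g' x). split; auto.
  intros x Hx. apply (is_derive_plus f g x); auto.
Qed.

Lemma Sm_opp D : forall n f, Sm D n f -> Sm D n (fun x => - f x).
Proof.
  induction n as [|n IH]; intros f Hf; simpl in *; auto.
  destruct Hf as [f' [Hf1 Hf2]].
  exists (fun x => - f' x). split; auto.
  intros x Hx. apply (is_derive_opp f x); auto.
Qed.

Lemma Sm_mult D : forall n f g, Sm D n f -> Sm D n g -> Sm D n (fun x => f x * g x).
Proof.
  induction n as [|n IH]; intros f g Hf Hg; auto.
  pose proof (Sm_down D n f Hf) as Hfn. pose proof (Sm_down D n g Hg) as Hgn.
  simpl in Hf, Hg. destruct Hf as [f' [Hf1 Hf2]]; destruct Hg as [g' [Hg1 Hg2]].
  exists (fun x => f' x * g x + f x * g' x). split.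
  - intros x Hx. apply (is_derive_mult f g x); auto. intros; apply Rmult_comm.
  - apply Sm_plus; apply IH; auto.
Qed.

Lemma Sm_minus D n f g : Sm D n f -> Sm D n g -> Sm D n (fun x => f x - g x).
Proof. intros; apply Sm_plus; auto; apply Sm_opp; auto. Qed.

Lemma Sm_comp (D E : R -> Prop) : forall n f g, Sm E n f -> Sm D n g ->
  (forall x, D x -> E (g x)) -> Sm D n (fun x => f (g x)).
Proof.
  induction n as [|n IH]; intros f g Hf Hg HDE; auto.
  pose proof (Sm_down D n g Hg) as Hgn.
  simpl in Hf, Hg. destruct Hf as [f' [Hf1 Hf2]]; destruct Hg as [g' [Hg1 Hg2]].
  exists (fun x => g' x * f' (g x)). split.
  - intros x Hx. apply (is_derive_comp f g x); auto.
  - apply Sm_mult; auto.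
Qed.

Lemma Sm_Rinv : forall n, Sm (fun x => x <> 0) n Rinv.
Proof.
  induction n as [|n IH]; simpl; auto.
  exists (fun x => - (/ x * / x)). split.
  - intros x Hx.
    assert (H := is_derive_inv (fun y => y) x 1 (is_derive_id x) Hx).
    replace (- (/ x * / x)) with (- 1 / x ^ 2) by (field; auto). exact H.
  - apply Sm_opp. apply (Sm_mult _ n Rinv Rinv); exact IH.
Qed.

Lemma Sm_inv D n f : Sm D n f -> (forall x, D x -> f x <> 0) -> Sm D n (fun x => / f x).
Proof. intros; apply (Sm_comp D (fun x => x <> 0) n Rinv f); auto. apply Sm_Rinv. Qed.

Lemma Sm_div D n f g : Sm D n f -> Sm D n g -> (forall x, D x -> g x <> 0) ->
  Sm D n (fun x => f x / g x).
Proof. intros; unfold Rdiv; apply Sm_mult; auto; apply Sm_inv; auto. Qed.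

Lemma Sm_sqrt_base : forall n, Sm (fun x => 0 < x) n sqrt.
Proof.
  induction n as [|n IH]; simpl; auto.
  exists (fun x => / (2 * sqrt x)). split.
  - intros x Hx.
    assert (H := is_derive_sqrt (fun y => y) x 1 (is_derive_id x) Hx).
    assert (0 < sqrt x) by (apply sqrt_lt_R0; auto).
    replace (/ (2 * sqrt x)) with (1 / (2 * sqrt x)) by (field; lra).
    exact H.
  - apply Sm_inv. apply (Sm_mult _ n (fun _ => 2) sqrt); [apply Sm_const|exact IH].
    intros x Hx. assert (0 < sqrt x) by (apply sqrt_lt_R0; auto). lra.
Qed.

Lemma Sm_sqrt D n f : Sm D n f -> (forall x, D x -> 0 < f x) -> Sm D n (fun x => sqrt (f x)).
Proof. intros; apply (Sm_comp D (fun x => 0 < x) n sqrt f); auto. apply Sm_sqrt_base. Qed.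

Lemma Sm_pow D n f k : Sm D n f -> Sm D n (fun x => f x ^ k).
Proof.
  intros H; induction k as [|k IH]; simpl. apply Sm_const. apply Sm_mult; auto.
Qed.

Lemma Sm_ext D : open D -> forall n f g, (forall x, D x -> f x = g x) -> Sm D n f -> Sm D n g.
Proof.
  intros HD n; destruct n as [|n]; intros f g Hfg Hf; simpl in *; auto.
  destruct Hf as [f' [H1 H2]]. exists f'. split; auto.
  intros x Hx. apply (is_derive_ext_loc f g); auto.
  generalize (HD x Hx). apply filter_imp. intros y Hy; auto.
Qed.

Lemma Derive_n_S_alt f : forall k x, Derive_n f (S k) x = Derive_n (Derive f) k x.
Proof.
  induction k as [|k IH]; intros x; simpl; auto.
  apply Derive_ext. intros t. apply IH.
Qed.

Lemma Sm_ex_derive_n D : open D -> forall n f, Sm D (S n) f -> forall x, D x -> ex_derive_n f n x.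
Proof.
  intros HD n; induction n as [|n IH]; intros f Hf x Hx; simpl; auto.
  simpl in Hf. destruct Hf as [f' [H1 H2]].
  assert (Hd : Sm D (S n) (Derive f)).
  { apply (Sm_ext D HD (S n) f'); auto. intros y Hy; symmetry; apply is_derive_unique; auto. }
  specialize (IH _ Hd x Hx).
  destruct n as [|n].
  - simpl. exists (f' x); apply H1; auto.
  - simpl in IH. apply (ex_derive_ext (Derive_n (Derive f) n)).
    intros t. symmetry. apply Derive_n_S_alt. exact IH.
Qed.

Definition convexD (D : R -> Prop) := forall x y z, D x -> D y -> Rmin x y <= z <= Rmax x y -> D z.

Lemma Sm_cont D n F : Sm D (S n) F -> forall x, D x -> continuous F x.
Proof.
  intros [F' [H1 _]] x Hx. apply (ex_derive_continuous (K:=R_AbsRing) (V:=R_NormedModule)). exists (F' x); auto.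
Qed.

Lemma Sm_ex_RInt D n F : convexD D -> Sm D (S n) F -> forall a b, D a -> D b -> ex_RInt F a b.
Proof.
  intros Hc HF a b Ha Hb. apply (ex_RInt_continuous (V:=R_CompleteNormedModule)). intros z Hz.
  apply (Sm_cont D n F HF). apply (Hc a b z); auto.
Qed.

Lemma Sm_RInt D n F a : open D -> convexD D -> D a -> Sm D (S n) F ->
  Sm D (S (S n)) (fun x => RInt F a x).
Proof.
  intros HD Hc Ha HF. exists F. split; auto.
  intros b Hb. apply is_derive_RInt with (a := a).
  - generalize (HD b Hb). apply filter_imp. intros b0 Hb0.
    apply (RInt_correct (V:=R_CompleteNormedModule)). apply (Sm_ex_RInt D n F); auto.
  - apply (Sm_cont D n F HF); auto.
Qed.

Lemma convex_pos : convexD (fun x => 0 < x).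
Proof. intros x y z Hx Hy [Hz _]. apply Rlt_le_trans with (2 := Hz). apply Rmin_glb_lt; auto. Qed.
Lemma convex_true : convexD (fun _ => True).
Proof. intros x y z _ _ _; exact I. Qed.

Ltac sm := repeat first [apply Sm_const | apply Sm_id | apply Sm_minus | apply Sm_plus | apply Sm_opp
   | apply Sm_div | apply Sm_mult | apply Sm_inv | apply Sm_pow | apply Sm_sqrt].

Lemma U_P eps lam x : x <> 0 -> eps ^ 2 - U lam x =
  ((eps^2 - 1) * x^3 + 2 * x^2 - lam^2 * x + 2 * lam^2) / x^3.
Proof. intros; unfold U; field; auto. Qed.

Lemma lamc_pos eps lam x : 1 < eps -> 0 <= lam -> lam < lambda_c eps -> 0 < x ->
  0 < eps ^ 2 - U lam x.
Proof.
  intros He Hl Hc Hx. rewrite U_P by lra.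
  apply Rdiv_lt_0_compat; [|apply pow_lt; auto].
  unfold lambda_c in Hc. 
  assert (Ha : 1/8 < alpha eps) by (unfold alpha; nra).
  assert (He2 : eps ^ 2 = 8 * (alpha eps + 1) / 9) by (unfold alpha; field).
  set (a := alpha eps) in *.
  set (r := sqrt (a^2 + a)) in *.
  assert (Hr2 : r * r = a^2 + a) by (unfold r; apply sqrt_sqrt; nra).
  assert (Hr0 : 0 <= r) by (unfold r; apply sqrt_pos).
  set (den := 1 - 4 * a - 8 * a ^ 2 + 8 * a * r) in *.
  assert (Hden : 0 < den).
  { destruct (Rle_lt_dec den 0) as [H|H]; auto.
    exfalso. assert (12 / den <= 0).
    { destruct (Req_dec den 0) as [->|H']. unfold Rdiv; rewrite Rinv_0; lra.
      assert (/ den < 0) by (apply Rinv_lt_0_compat; lra). unfold Rdiv; nra. }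
    rewrite sqrt_neg_0 in Hc; lra. }
  assert (HL : lam ^ 2 < 12 / den).
  { assert (0 < 12 / den) by (apply Rdiv_lt_0_compat; lra).
    pose proof (sqrt_sqrt (12/den)). nra. }
  set (v := r / a).
  assert (Hv2 : v ^ 2 - 1 = / a) by (unfold v; field_simplify_eq; [nra|lra]).
  assert (Hv0 : 0 <= v) by (unfold v; apply Rdiv_le_0_compat; lra).
  assert (Hv1 : 1 < v) by (assert (0 < / a) by (apply Rinv_0_lt_compat; lra); nra).
  assert (Hv3 : v < 3).
  { assert (/ a < 8). { replace 8 with (/ (1/8)) by field. apply Rinv_lt_contravar; nra. } nra. }
  assert (Hav : a = / (v^2 - 1)) by (rewrite Hv2, Rinv_inv; reflexivity).
  assert (Hrv : r = v / (v^2-1)) by (replace (v / (v^2-1)) with (v * a) by (rewrite Hav; reflexivity); unfold v; field; lra).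
  assert (Hdenv : den = (v-1)*(v+3)/(v+1)^2).
  { unfold den. rewrite Hrv, Hav. field. repeat split; intro; nra. }
  rewrite He2.
  destruct (Rle_lt_dec x 2) as [Hx2|Hx2].
  { assert (0 < (8 * (a + 1) / 9 - 1)) by lra. 
    assert (0 < (8 * (a + 1) / 9 - 1) * x^3) by (apply Rmult_lt_0_compat; auto; apply pow_lt; lra).
    nra. }
  assert (Hkey : (8 * (a + 1) / 9 - 1) * x ^ 3 + 2 * x ^ 2 - 12 / den * (x - 2) =
     ((v+3)*x - 6*(v+1))^2 * ((3-v)*x + 6*(v+1)) / (9*(v^2-1)*(v+3))).
  { rewrite Hdenv, Hav. field. repeat split; intro; nra. }
  assert (0 <= ((v+3)*x - 6*(v+1))^2 * ((3-v)*x + 6*(v+1)) / (9*(v^2-1)*(v+3))).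
  { apply Rdiv_le_0_compat. apply Rmult_le_pos. apply pow2_ge_0. nra. assert (0 < v^2-1) by nra. assert (0 < (v^2-1)*(v+3)) by (apply Rmult_lt_0_compat; lra). nra. }
  nra.
Qed.

Lemma U_nonneg lam x : 2 <= x -> 0 <= U lam x.
Proof.
  intros Hx; unfold U. apply Rmult_le_pos.
  - assert (2 / x <= 1). { apply Rcomplements.Rle_div_l; lra. } lra.
  - assert (0 <= lam ^ 2 / x ^ 2). { apply Rdiv_le_0_compat. apply pow2_ge_0. apply pow_lt; lra. } lra.
Qed.

Section Br.
Variables eps lam x : R.
Hypothesis Heps : 1 < eps.
Hypothesis Hx : 0 < x.
Hypothesis HS : 0 < eps ^ 2 - U lam x.

Let s := s_fun eps lam x.
Lemma s_pos : 0 < s.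
Proof. unfold s, s_fun. apply sqrt_lt_R0; auto. Qed.
Lemma s_sq : s * s = eps ^ 2 - U lam x.
Proof. unfold s, s_fun. apply sqrt_sqrt; lra. Qed.
Lemma bs_pos : 0 < 2 / x * eps + s.
Proof. pose proof s_pos. assert (0 < 2 / x) by (apply Rdiv_lt_0_compat; lra). nra. Qed.

Lemma den_minus : (1 - 2 / x) * pi_minus eps lam x - 2 / x * eps = - s.
Proof.
  pose proof bs_pos. pose proof s_pos. pose proof s_sq as Hsq.
  assert (E : (1 - 2 / x) * pi_minus eps lam x - 2 / x * eps - - s =
     (s * s - (eps ^ 2 - U lam x)) / (2 / x * eps + s)).
  { unfold pi_minus, U. fold s. field; repeat split; intro; nra. }
  rewrite Hsq in E. lra.
Qed.

Lemma num_minus : 2 / x * pi_minus eps lam x + (1 + 2 / x) * eps =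
   (2 * (1 + lam^2/x^2) / x + (1 + 2/x) * eps * s) / (2 / x * eps + s).
Proof.
  pose proof bs_pos. pose proof s_pos. unfold pi_minus. fold s. field; repeat split; intro; nra.
Qed.

Lemma num_minus_pos : 0 < 2 / x * pi_minus eps lam x + (1 + 2 / x) * eps.
Proof.
  rewrite num_minus. pose proof bs_pos. pose proof s_pos.
  apply Rdiv_lt_0_compat; auto.
  assert (0 < 2/x) by (apply Rdiv_lt_0_compat; lra).
  assert (0 <= lam^2/x^2) by (apply Rdiv_le_0_compat; [apply pow2_ge_0|apply pow_lt; lra]).
  assert (0 < 2 * (1 + lam^2/x^2) / x) by (apply Rdiv_lt_0_compat; lra).
  assert (0 < (1 + 2/x) * eps * s) by (apply Rmult_lt_0_compat; [apply Rmult_lt_0_compat|]; lra).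
  lra.
Qed.

Lemma num_minus_ge (H2 : 2 <= x) : s / 2 <= 2 / x * pi_minus eps lam x + (1 + 2 / x) * eps.
Proof.
  rewrite num_minus. pose proof bs_pos. pose proof s_pos. pose proof s_sq as Hsq.
  pose proof (U_nonneg lam x H2).
  assert (s <= eps) by nra.
  assert (0 < 2/x) by (apply Rdiv_lt_0_compat; lra).
  assert (2 / x <= 1) by (apply Rcomplements.Rle_div_l; lra).
  assert (0 <= lam^2/x^2) by (apply Rdiv_le_0_compat; [apply pow2_ge_0|apply pow_lt; lra]).
  assert (0 < 2 * (1 + lam^2/x^2) / x) by (apply Rdiv_lt_0_compat; lra).
  apply (Rcomplements.Rle_div_r (s/2)); auto.
  assert (2 / x * eps <= eps) by nra.
  assert (s * (2 / x * eps + s) <= s * (2 * eps)) by (apply Rmult_le_compat_l; lra).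
  assert (eps * s <= (1 + 2/x) * eps * s) by nra.
  lra.
Qed.

Lemma pm_alt (H2 : 2 < x) : pi_minus eps lam x = (2 / x * eps - s) / (1 - 2 / x).
Proof.
  pose proof bs_pos. pose proof s_pos. pose proof s_sq as Hsq.
  assert (2 / x < 1) by (apply Rcomplements.Rlt_div_l; lra).
  assert (E : pi_minus eps lam x - (2 / x * eps - s) / (1 - 2 / x) =
     (s * s - (eps ^ 2 - U lam x)) / ((2 / x * eps + s) * (1 - 2/x))).
  { unfold pi_minus, U. fold s. field; repeat split; intro; nra. }
  rewrite Hsq in E. unfold Rminus at 1 in E. rewrite Rminus_diag, Rdiv_0_l in E. lra.
Qed.

End Br.

Lemma Fa_smooth eps lam : 1 < eps -> (forall t, 0 < t -> 0 < eps ^ 2 - U lam t) ->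
  forall n, Sm (fun t => 0 < t) n (fun t => integrand eps t (pi_minus eps lam t)).
Proof.
  intros He HS n.
  unfold integrand, pi_minus, s_fun, U. sm; intros t Ht; try (apply pow_nonzero; lra); try lra;
  pose proof (HS t Ht) as H1; pose proof (bs_pos eps lam t He Ht H1) as H2;
  pose proof (den_minus eps lam t He Ht H1) as H3; assert (H4 : 0 < s_fun eps lam t) by (apply s_pos; auto);
  pose proof (num_minus_pos eps lam t He Ht H1) as H5;
  unfold pi_minus, s_fun, U in *; lra.
Qed.

Lemma Fa_le eps lam t : 1 < eps -> (forall t, 0 < t -> 0 < eps ^ 2 - U lam t) -> 2 <= t ->
  integrand eps t (pi_minus eps lam t) <= - / 2.
Proof.
  intros He HS H2.
  assert (Ht : 0 < t) by lra. pose proof (HS t Ht) as H1.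
  assert (H4 : 0 < s_fun eps lam t) by (apply s_pos; auto).
  pose proof (num_minus_ge eps lam t He Ht H1 H2) as H5.
  unfold integrand. rewrite (den_minus eps lam t He Ht H1).
  set (s := s_fun eps lam t) in *. set (N := 2 / t * pi_minus eps lam t + (1 + 2 / t) * eps) in *.
  replace (N / - s) with (- (N / s)) by (field; lra).
  assert (/ 2 <= N / s). { apply Rcomplements.Rle_div_r; lra. }
  lra.
Qed.

Lemma partA eps lam : 1 < eps -> 0 <= lam -> lam < lambda_c eps ->
     (forall x, 2 <= x -> ex_RInt (fun t => integrand eps t (pi_minus eps lam t)) 2 x)
     /\ (forall x, 2 <= x -> forall n, ex_derive_n (G_in eps lam) n x)
     /\ (forall x y, 2 <= x -> x < y -> G_in eps lam y < G_in eps lam x)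
     /\ G_in eps lam 2 = 0
     /\ is_lim (G_in eps lam) p_infty m_infty.
Proof.
  intros He Hl Hc.
  assert (HS : forall t, 0 < t -> 0 < eps ^ 2 - U lam t) by (intros; apply lamc_pos; auto).
  set (F := fun t => integrand eps t (pi_minus eps lam t)).
  assert (HF : forall n, Sm (fun t => 0 < t) n F) by (apply Fa_smooth; auto).
  assert (Hex : forall a b, 0 < a -> 0 < b -> ex_RInt F a b).
  { intros a b Ha Hb. apply (Sm_ex_RInt _ 0 F convex_pos (HF 1%nat)); auto. }
  assert (Hcont : forall z, 0 < z -> continuous F z).
  { intros z Hz. apply (Sm_cont _ 0 F (HF 1%nat)); auto. }
  split; [|split; [|split; [|split]]].
  - intros x Hx. apply Hex; lra.
  - intros x Hx n. apply (Sm_ex_derive_n (fun t => 0 < t) (open_gt 0)); [|lra].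
    apply Sm_down. unfold G_in; fold F.
    apply (Sm_RInt _ n F 2 (open_gt 0) convex_pos); auto; lra.
  - intros x y Hx Hxy. unfold G_in. fold F.
    rewrite <- (RInt_Chasles F 2 x y) by (apply Hex; lra).
    assert (RInt F x y < RInt (fun _ => 0) x y).
    { apply RInt_lt; auto. intros z Hz; apply continuous_const.
      intros z Hz; apply Hcont; lra.
      intros z Hz. pose proof (Fa_le eps lam z He HS). fold F in H. assert (F z <= - / 2) by (apply H; lra). lra. }
    rewrite RInt_const in H. unfold scal in H; simpl in H; unfold mult in H; simpl in H.
    unfold plus; simpl. lra.
  - unfold G_in. exact (RInt_point (V:=R_CompleteNormedModule) 2 _).
  - apply is_lim_spec. intros M. exists (Rmax 2 (2 - 2 * M)). intros x Hx.
    assert (Hx2 : 2 < x) by (eapply Rle_lt_trans; [apply Rmax_l|]; eauto).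
    assert (Hx3 : 2 - 2 * M < x) by (eapply Rle_lt_trans; [apply Rmax_r|]; eauto).
    unfold G_in. fold F.
    assert (RInt F 2 x <= RInt (fun _ => - / 2) 2 x).
    { apply RInt_le; auto. lra. apply Hex; lra. apply ex_RInt_const.
      intros z Hz. apply (Fa_le eps lam z He HS). lra. }
    rewrite RInt_const in H. unfold scal in H; simpl in H; unfold mult in H; simpl in H.
    lra.
Qed.

Definition Qf eps lam xi0 u := (eps^2-1)*(u^2 + 3*xi0*u + 3*xi0^2) + 2*(u + 2*xi0) - lam^2.
Definition hf eps lam xi0 u := Qf eps lam xi0 u / (xi0+u)^3.
Definition gB eps lam xi0 t :=
  2 * (2 / (xi0 + t^2) * ((2 / (xi0 + t^2) * eps + t * sqrt (hf eps lam xi0 (t^2))) / (1 - 2 / (xi0 + t^2)))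
       + (1 + 2 / (xi0 + t^2)) * eps) / sqrt (hf eps lam xi0 (t^2)).

Lemma xi0_facts eps lam xi0 : 1 < eps -> xi_max lam < xi0 -> U lam xi0 = eps ^ 2 ->
  2 < xi0 /\ 0 < Qf eps lam xi0 0.
Proof.
  intros He Hm HU.
  unfold xi_max in Hm.
  set (D := lam ^ 4 - 12 * lam ^ 2) in *.
  assert (Hsq0 : 0 <= sqrt D) by apply sqrt_pos.
  assert (Hsq : sqrt D <= lam ^ 2).
  { destruct (Rle_lt_dec D 0) as [H|H]. rewrite sqrt_neg_0 by auto. nra.
    pose proof (sqrt_sqrt D (Rlt_le _ _ H)). unfold D in *. nra. }
  assert (Hx0 : 0 < xi0) by lra.
  assert (E : (eps^2 - 1) * xi0^3 = -2 * xi0^2 + lam^2 * xi0 - 2 * lam^2).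
  { rewrite <- HU. unfold U. field. lra. }
  assert (Hb : 0 < eps^2 - 1) by nra.
  assert (Hp3 : 0 < xi0^3) by (apply pow_lt; lra).
  assert (E1 : 2 * xi0^2 < lam^2 * (xi0 - 2)) by nra.
  assert (Hl0 : 0 <= lam^2) by apply pow2_ge_0.
  assert (Hx2 : 2 < xi0).
  { destruct (Rle_lt_dec xi0 2); auto. assert (0 <= lam^2 * (2 - xi0)) by (apply Rmult_le_pos; lra). nra. }
  split; auto.
  assert (Hl2 : 2 * xi0 < lam^2) by nra.
  assert (Hl16 : 16 < lam^2).
  { destruct (Rle_lt_dec (lam^2) 16); auto.
    assert (lam^2 * (xi0 - 2) <= 16 * (xi0 - 2)) by (apply Rmult_le_compat_r; lra).
    assert (0 <= (xi0 - 4)^2) by apply pow2_ge_0. nra. }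
  assert (HD : 0 < D) by (unfold D; nra).
  pose proof (sqrt_sqrt D (Rlt_le _ _ HD)) as HDD.
  assert (Hq : xi0^2 - lam^2 * xi0 + 3 * lam^2 < 0).
  { assert (0 < lam^2/2 - xi0) by lra.
    assert (lam^2/2 - xi0 < sqrt D / 2) by lra.
    assert ((lam^2/2 - xi0)^2 < (sqrt D/2)^2) by nra.
    unfold D in *. nra. }
  unfold Qf.
  assert (E2 : ((eps ^ 2 - 1) * (0 ^ 2 + 3 * xi0 * 0 + 3 * xi0 ^ 2) + 2 * (0 + 2 * xi0) - lam ^ 2) * xi0
     = -2 * (xi0^2 - lam^2 * xi0 + 3 * lam^2)).
  { replace (((eps ^ 2 - 1) * (0 ^ 2 + 3 * xi0 * 0 + 3 * xi0 ^ 2) + 2 * (0 + 2 * xi0) - lam ^ 2) * xi0)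
     with (3 * ((eps^2 - 1) * xi0^3) + 4 * xi0^2 - lam^2 * xi0) by ring.
    rewrite E. ring. }
  nra.
Qed.

Section PB.
Variables eps lam xi0 : R.
Hypothesis He : 1 < eps.
Hypothesis Hm : xi_max lam < xi0.
Hypothesis HU : U lam xi0 = eps ^ 2.

Lemma xi0_gt2 : 2 < xi0.
Proof. apply (xi0_facts eps lam xi0); auto. Qed.

Lemma hf_pos u : 0 <= u -> 0 < hf eps lam xi0 u.
Proof.
  intros Hu. destruct (xi0_facts eps lam xi0 He Hm HU) as [H2 HQ].
  unfold hf. apply Rdiv_lt_0_compat; [|apply pow_lt; lra].
  unfold Qf in *. assert (0 < eps^2 - 1) by nra.
  assert (0 <= (eps^2-1) * (u^2 + 3 * xi0 * u)) by (apply Rmult_le_pos; nra).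
  nra.
Qed.

Lemma S_eq u : 0 <= u -> eps ^ 2 - U lam (xi0 + u) = u * hf eps lam xi0 u.
Proof.
  intros Hu. pose proof xi0_gt2.
  assert (E : eps ^ 2 - U lam xi0 = 0) by lra.
  rewrite U_P in E by lra. rewrite U_P by lra.
  assert (P0 : (eps ^ 2 - 1) * xi0 ^ 3 + 2 * xi0 ^ 2 - lam ^ 2 * xi0 + 2 * lam ^ 2 = 0).
  { assert (0 < xi0^3) by (apply pow_lt; lra).
    apply Rmult_eq_reg_r with (/ xi0^3). rewrite Rmult_0_l. exact E.
    apply Rgt_not_eq, Rinv_0_lt_compat; auto. }
  unfold hf, Qf.
  replace ((eps ^ 2 - 1) * (xi0 + u) ^ 3 + 2 * (xi0 + u) ^ 2 - lam ^ 2 * (xi0 + u) + 2 * lam ^ 2)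
    with (((eps ^ 2 - 1) * xi0 ^ 3 + 2 * xi0 ^ 2 - lam ^ 2 * xi0 + 2 * lam ^ 2) +
          u * ((eps ^ 2 - 1) * (u ^ 2 + 3 * xi0 * u + 3 * xi0 ^ 2) + 2 * (u + 2 * xi0) - lam ^ 2)) by ring.
  rewrite P0. field. lra.
Qed.

Lemma s_eq t : s_fun eps lam (xi0 + t^2) = Rabs t * sqrt (hf eps lam xi0 (t^2)).
Proof.
  unfold s_fun. rewrite S_eq by (apply pow2_ge_0).
  rewrite sqrt_mult_alt by (apply pow2_ge_0).
  f_equal. rewrite <- sqrt_Rsqr_abs. unfold Rsqr. f_equal. ring.
Qed.

Lemma S_pos t : t <> 0 -> 0 < eps ^ 2 - U lam (xi0 + t^2).
Proof.
  intros Ht. rewrite S_eq by apply pow2_ge_0.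
  apply Rmult_lt_0_compat. apply pow2_gt_0; auto. apply hf_pos, pow2_ge_0.
Qed.

Lemma curve_pi_eq t : t <> 0 -> curve_pi eps lam xi0 t =
  (2 / (xi0 + t^2) * eps + t * sqrt (hf eps lam xi0 (t^2))) / (1 - 2 / (xi0 + t^2)).
Proof.
  intros Ht. pose proof xi0_gt2. assert (0 <= t^2) by apply pow2_ge_0.
  unfold curve_pi, curve_xi. destruct (Rlt_dec t 0) as [Hn|Hn].
  - rewrite (pm_alt eps lam (xi0 + t^2) He) by (try apply S_pos; auto; lra).
    rewrite s_eq, Rabs_left by auto. f_equal. ring.
  - unfold pi_plus. rewrite s_eq, Rabs_right by lra. reflexivity.
Qed.


Lemma f_eq_gB t : t <> 0 ->
  integrand eps (curve_xi xi0 t) (curve_pi eps lam xi0 t) * (2 * t) = gB eps lam xi0 t.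
Proof.
  intros Ht. pose proof xi0_gt2. assert (0 <= t^2) by apply pow2_ge_0.
  assert (Hh : 0 < sqrt (hf eps lam xi0 (t^2))) by (apply sqrt_lt_R0, hf_pos; auto).
  assert (2 / (xi0 + t^2) < 1) by (apply Rcomplements.Rlt_div_l; lra).
  rewrite curve_pi_eq by auto. unfold integrand, gB, curve_xi.
  assert (Hp : 0 < sqrt (hf eps lam xi0 (t^2)) * (xi0 + t^2)) by (apply Rmult_lt_0_compat; lra).
  field. repeat split; try (intro; nra).
  all: intro HH; apply Ht; apply Rmult_eq_reg_r with (sqrt (hf eps lam xi0 (t^2)) * (xi0 + t^2)); lra.
Qed.

Lemma gB_bound t : 0 < gB eps lam xi0 t /\ Rabs t <= gB eps lam xi0 t.
Proof.
  pose proof xi0_gt2. assert (Ht2 : 0 <= t^2) by apply pow2_ge_0.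
  set (x := xi0 + t^2).
  assert (Hx2 : 2 < x) by (unfold x; lra).
  set (h := sqrt (hf eps lam xi0 (t^2))).
  assert (Hh : 0 < h) by (apply sqrt_lt_R0, hf_pos; auto).
  assert (Hb : 0 < 2 / x) by (apply Rdiv_lt_0_compat; lra).
  assert (Ha : 2 / x < 1) by (apply Rcomplements.Rlt_div_l; lra).
  set (N := 2 / x * ((2 / x * eps + t * h) / (1 - 2 / x)) + (1 + 2 / x) * eps).
  assert (HgN : gB eps lam xi0 t = 2 * N / h) by reflexivity.
  assert (Hs : s_fun eps lam x = Rabs t * h) by (apply s_eq).
  assert (HsE : s_fun eps lam x <= eps).
  { assert (0 <= s_fun eps lam x) by apply sqrt_pos.
    pose proof (U_nonneg lam x (Rlt_le _ _ Hx2)).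
    destruct (Req_dec t 0) as [->|Ht0].
    - rewrite Hs, Rabs_R0. lra.
    - pose proof (S_pos t Ht0) as HS. fold x in HS.
      assert (s_fun eps lam x * s_fun eps lam x = eps^2 - U lam x) by (apply s_sq; auto; lra).
      nra. }
  assert (Key : Rabs t * h <= 2 * N /\ 0 < N).
  { destruct (Rlt_dec t 0) as [Hn|Hn].
    - assert (Ht0 : t <> 0) by lra.
      pose proof (S_pos t Ht0) as HS. fold x in HS.
      assert (EN : N = 2 / x * pi_minus eps lam x + (1 + 2 / x) * eps).
      { unfold N. f_equal. f_equal. pose proof (curve_pi_eq t Ht0) as E.
        unfold curve_pi, curve_xi in E. destruct (Rlt_dec t 0); [|lra]. fold x in E. rewrite E. reflexivity. }
      rewrite EN, <- Hs. split.
      + pose proof (num_minus_ge eps lam x He ltac:(lra) HS ltac:(lra)). lra.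
      + apply num_minus_pos; auto; lra.
    - assert (0 <= t) by lra. rewrite Rabs_right in * by lra.
      assert (0 <= t * h) by (apply Rmult_le_pos; lra).
      assert (0 <= (2 / x * eps + t * h) / (1 - 2 / x)) by (apply Rdiv_le_0_compat; nra).
      assert (0 <= 2 / x * ((2 / x * eps + t * h) / (1 - 2 / x))) by (apply Rmult_le_pos; lra).
      assert (eps <= (1 + 2/x) * eps) by nra.
      unfold N. split; lra. }
  destruct Key as [K1 K2]. rewrite HgN. split.
  - apply Rdiv_lt_0_compat; lra.
  - apply Rcomplements.Rle_div_r; auto.
Qed.

Lemma gB_smooth n : Sm (fun _ => True) n (gB eps lam xi0).
Proof.
  pose proof xi0_gt2.
  unfold gB, hf, Qf. sm; intros t _; assert (Ht2 : 0 <= t^2) by apply pow2_ge_0;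
  try (assert (2 / (xi0 + t^2) < 1) by (apply Rcomplements.Rlt_div_l; lra));
  try (apply pow_nonzero); try lra.
  all: pose proof (hf_pos _ Ht2) as Hh; unfold hf, Qf in Hh; auto.
  all: pose proof (sqrt_lt_R0 _ Hh); lra.
Qed.
End PB.

Lemma partB eps lam : 1 < eps -> forall xi0 : R, xi_max lam < xi0 -> U lam xi0 = eps ^ 2 ->
     (forall tau, ex_RInt (fun t => integrand eps (curve_xi xi0 t)
                                     (curve_pi eps lam xi0 t) * (2 * t)) 0 tau)
     /\ (forall tau n, ex_derive_n (G_scat eps lam xi0) n tau)
     /\ (forall s t, s < t -> G_scat eps lam xi0 s < G_scat eps lam xi0 t)
     /\ G_scat eps lam xi0 0 = 0
     /\ is_lim (G_scat eps lam xi0) m_infty m_infty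
     /\ is_lim (G_scat eps lam xi0) p_infty p_infty.
Proof.
  intros He xi0 Hm HU.
  set (g := gB eps lam xi0).
  assert (Hg : forall n, Sm (fun _ => True) n g) by (intros; apply gB_smooth; auto).
  assert (Hex : forall a b, ex_RInt g a b).
  { intros a b. apply (Sm_ex_RInt _ 0 g convex_true (Hg 1%nat)); auto. }
  assert (Hcont : forall z, continuous g z).
  { intros z. apply (Sm_cont _ 0 g (Hg 1%nat)); auto. }
  assert (Hb : forall t, 0 < g t /\ Rabs t <= g t) by (intros; apply gB_bound; auto).
  assert (Hfg : forall tau x, Rmin 0 tau < x < Rmax 0 tau ->
     g x = integrand eps (curve_xi xi0 x) (curve_pi eps lam xi0 x) * (2 * x)).
  { intros tau x Hx. symmetry. apply f_eq_gB; auto.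
    unfold Rmin, Rmax in Hx. destruct (Rle_dec 0 tau); lra. }
  assert (HG : forall tau, G_scat eps lam xi0 tau = RInt g 0 tau).
  { intros tau. unfold G_scat. apply RInt_ext. intros x Hx. symmetry. apply (Hfg tau); auto. }
  assert (Hlow : forall a b, a <= b -> (forall x, a < x < b -> 1 <= g x) -> b - a <= RInt g a b).
  { intros a b Hab H1. 
    assert (RInt (fun _ => 1) a b <= RInt g a b).
    { apply RInt_le; auto. apply ex_RInt_const. }
    rewrite RInt_const in H. unfold scal in H; simpl in H; unfold mult in H; simpl in H. lra. }
  assert (Hpos : forall a b, a <= b -> 0 <= RInt g a b).
  { intros a b Hab. apply RInt_ge_0; auto. intros x _. destruct (Hb x); lra. }
  split; [|split; [|split; [|split; [|split]]]].
  - intros tau. apply (ex_RInt_ext g). apply Hfg. apply Hex.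
  - intros tau n. apply (Sm_ex_derive_n (fun _ => True) open_true); auto.
    apply (Sm_ext _ open_true (S n) (fun tau => RInt g 0 tau)).
    + intros x _. symmetry. apply HG.
    + apply Sm_down. apply (Sm_RInt _ n g 0 open_true convex_true); auto.
  - intros s t Hst. rewrite !HG.
    rewrite <- (RInt_Chasles g 0 s t) by auto.
    assert (0 < RInt g s t).
    { apply RInt_gt_0; auto. intros x _. apply Hb. }
    unfold plus; simpl. lra.
  - rewrite HG. exact (RInt_point (V:=R_CompleteNormedModule) 0 _).
  - apply is_lim_spec. intros M. exists (Rmin (-1) (M - 1)). intros tau Htau.
    assert (H1 : tau < -1) by (apply Rlt_le_trans with (1 := Htau); apply Rmin_l).
    assert (H2 : tau < M - 1) by (apply Rlt_le_trans with (1 := Htau); apply Rmin_r).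
    rewrite HG. rewrite <- (RInt_Chasles g 0 (-1) tau) by auto.
    rewrite <- (opp_RInt_swap g (-1) 0) by auto.
    rewrite <- (opp_RInt_swap g tau (-1)) by auto.
    assert (0 <= RInt g (-1) 0) by (apply Hpos; lra).
    assert (-1 - tau <= RInt g tau (-1)).
    { apply Hlow. lra. intros x Hx. destruct (Hb x). rewrite Rabs_left in H3; lra. }
    unfold plus, opp; simpl. lra.
  - apply is_lim_spec. intros M. exists (Rmax 1 (M + 1)). intros tau Htau.
    assert (H1 : 1 < tau) by (apply Rle_lt_trans with (2 := Htau); apply Rmax_l).
    assert (H2 : M + 1 < tau) by (apply Rle_lt_trans with (2 := Htau); apply Rmax_r).
    rewrite HG. rewrite <- (RInt_Chasles g 0 1 tau) by auto.
    assert (0 <= RInt g 0 1) by (apply Hpos; lra).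
    assert (tau - 1 <= RInt g 1 tau).
    { apply Hlow. lra. intros x Hx. destruct (Hb x). rewrite Rabs_right in H3; lra. }
    unfold plus; simpl. lra.
Qed.

Theorem lemma3 (eps lam : R) (Heps : 1 < eps) (Hlam : 0 <= lam)
  (Hne : lam <> lambda_c eps) :
  (* (a) *)
  (lam < lambda_c eps ->
     (forall x, 2 <= x -> ex_RInt (fun t => integrand eps t (pi_minus eps lam t)) 2 x)
     /\ (forall x, 2 <= x -> forall n, ex_derive_n (G_in eps lam) n x)
     /\ (forall x y, 2 <= x -> x < y -> G_in eps lam y < G_in eps lam x)
     /\ G_in eps lam 2 = 0
     /\ is_lim (G_in eps lam) p_infty m_infty)
  /\
  (* (b) *)
  (lambda_c eps < lam ->
   forall xi0 : R, xi_max lam < xi0 -> U lam xi0 = eps ^ 2 ->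
     (forall tau, ex_RInt (fun t => integrand eps (curve_xi xi0 t)
                                     (curve_pi eps lam xi0 t) * (2 * t)) 0 tau)
     /\ (forall tau n, ex_derive_n (G_scat eps lam xi0) n tau)
     /\ (forall s t, s < t -> G_scat eps lam xi0 s < G_scat eps lam xi0 t)
     /\ G_scat eps lam xi0 0 = 0
     /\ is_lim (G_scat eps lam xi0) m_infty m_infty
     /\ is_lim (G_scat eps lam xi0) p_infty p_infty).
Proof.
  split.
  - intros Hc. apply partA; auto.
  - intros _. apply partB; auto.
Qed.
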